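(* The solitary mechanism satisfies weak UIC, weak MIC, and $c$-weak-SCP for every integer $c\ge1$, for any block size $B\ge2$ (finite or infinite).
   Context: Setting (TFM). Each user $i$ has a true value $v_i\ge0$ and submits a single bid $b_i\ge0$. A TFM consists of an inclusion rule (run by the miner, choosing at most $B$ bids to include) and confirmation, payment and miner-revenue rules (run by the blockchain on the included bids). Solitary mechanism: include the two highest bids (a missing bid counts as $0$); only the highest included bid is confirmed, and it pays the second-highest included bid; the miner is paid the second-highest included bid. Strategic players: a user, the miner, or the miner with some users; they may have users bid untruthfully after seeing all bids, inject fake bids (true value $0$), and (if the miner is involved) include any at most $B$ available bids. Weak ($1$-strict) utility: miner revenue (if the miner is in the player) plus $v-p$ for each confirmed transaction of the player (true value $v$, payment $p$), minus $(b-v)$ for each unconfirmed transaction of the player with bid $b>v$. Weak UIC: with an honest miner, each user's weak utility is maximized by truthful bidding without fake bids, whatever the other bids. Weak MIC: the miner's weak utility is maximized by honestly following the inclusion rule without fake bids, whatever the bids. $c$-weak-SCP: for every coalition of the miner with between $1$ and $c$ users, joint weak utility is maximized by truthful bidding and honest miner behavior, whatever the other bids. *)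

(* Defs.v *)
From mathcomp Require Import all_boot all_order all_algebra.
Set Implicit Arguments. Unset Strict Implicit. Unset Printing Implicit Defensive.
Import Order.TTheory GRing.Theory Num.Theory.
Local Open Scope ring_scope.

Section TFM.
Variable R : realFieldType.

(* A bid entry: (bid amount, owner).  owner = None : an honest outside user;
   owner = Some v : a transaction of the strategic player with true value v
   (fake bids are player transactions with true value 0). *)
Definition entry := (R * option R)%type.

Definition ge_amt (x y : entry) : bool := y.1 <= x.1.

(* Block size: Some n (finite n) or None (infinite). *)
Definition fits (B : option nat) (n : nat) : bool :=
  if B is Some b then (n <= b)%N else true.

(* Honest inclusion rule: include the two highest bids (stable sort of the
   pool; ties are broken by the position in the pool). *)
Definition honest_block (pool : seq entry) : seq entry :=
  take 2 (sort ge_amt pool).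

Definition confirmed (blk : seq entry) : option entry := ohead (sort ge_amt blk).

Definition payment (blk : seq entry) : R := (nth (0, None) (sort ge_amt blk) 1).1.

Definition miner_revenue (blk : seq entry) : R := payment blk.

Definition unconfirmed (pool blk : seq entry) : seq entry :=
  if confirmed blk is Some e then rem e pool else pool.

Definition overbid (e : entry) : R :=
  if e.2 is Some v then (if v < e.1 then e.1 - v else 0) else 0.

Definition weak_util (miner_in : bool) (pool blk : seq entry) : R :=
  (if miner_in then miner_revenue blk else 0)
  + (match confirmed blk with Some (_, Some v) => v - payment blk | _ => 0 end)
  - \sum_(e <- unconfirmed pool blk) overbid e.

(* a block the (possibly strategic) miner may choose: at most B bids drawn
   from the available bids (each at most once), in any order *)
Definition valid_block (B : option nat) (pool blk : seq entry) : Prop :=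
  fits B (size blk) /\ exists m : bitseq, perm_eq blk (mask m pool).

Definition nonneg (x : R) : bool := 0 <= x.

Definition tag_out (others : seq R) : seq entry := [seq (x, None) | x <- others].

Definition truthful_pool (others vs : seq R) : seq entry :=
  tag_out others ++ [seq (v, Some v) | v <- vs].

Definition dev_pool (others : seq R) (bvs : seq (R * R)) (fakes : seq R)
  : seq entry :=
  tag_out others ++ [seq (p.1, Some p.2) | p <- bvs]
                 ++ [seq (f, Some 0) | f <- fakes].

(* Weak UIC (honest miner, a single strategic user). The order of the pool
   (which only affects tie-breaking) is arbitrary in both scenarios. *)
Definition weak_UIC : Prop :=
  forall (v b : R) (others fakes : seq R) (hpool dpool : seq entry),
    0 <= v -> 0 <= b -> all nonneg others -> all nonneg fakes ->
    perm_eq hpool (truthful_pool others [:: v]) ->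
    perm_eq dpool (dev_pool others [:: (b, v)] fakes) ->
    weak_util false dpool (honest_block dpool)
      <= weak_util false hpool (honest_block hpool).

Definition weak_MIC (B : option nat) : Prop :=
  forall (others fakes : seq R) (hpool dpool blk : seq entry),
    all nonneg others -> all nonneg fakes ->
    perm_eq hpool (truthful_pool others [::]) ->
    perm_eq dpool (dev_pool others [::] fakes) ->
    valid_block B dpool blk ->
    weak_util true dpool blk <= weak_util true hpool (honest_block hpool).

Definition c_weak_SCP (B : option nat) (c : nat) : Prop :=
  forall (vs bs others fakes : seq R) (hpool dpool blk : seq entry),
    (1 <= size vs <= c)%N -> size bs = size vs ->
    all nonneg vs -> all nonneg bs -> all nonneg others -> all nonneg fakes ->
    perm_eq hpool (truthful_pool others vs) ->
    perm_eq dpool (dev_pool others (zip bs vs) fakes) ->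
    valid_block B dpool blk ->
    weak_util true dpool blk <= weak_util true hpool (honest_block hpool).

End TFM.

(* Main.v *)
Require Import Defs.
From mathcomp Require Import all_boot all_order all_algebra.
Set Implicit Arguments. Unset Strict Implicit. Unset Printing Implicit Defensive.
Import Order.TTheory GRing.Theory Num.Theory.
Local Open Scope ring_scope.

Section Proofs.
Variable R : realFieldType.
Local Notation entry := (entry R).
Local Notation ge := (@ge_amt R).

Lemma ge_total : total ge.
Proof. by move=> x y; rewrite /ge_amt le_total. Qed.

Lemma ge_trans : transitive ge.
Proof. by move=> y x z; rewrite /ge_amt => h1 h2; apply: le_trans h2 h1. Qed.

Lemma sorted_head (a : entry) t y : sorted ge (a :: t) -> y \in t -> y.1 <= a.1.
Proof.
move=> st yt; have := order_path_min ge_trans st.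
by move/allP/(_ _ yt).
Qed.

Lemma sort_hd (l : seq entry) a t y : sort ge l = a :: t -> y \in l -> y.1 <= a.1.
Proof.
move=> E yl; have st := sort_sorted ge_total l; rewrite E in st.
have : y \in sort ge l by rewrite mem_sort.
rewrite E inE => /orP [/eqP -> //|]; exact: sorted_head.
Qed.

Lemma sort_2nd (l : seq entry) a b t y : sort ge l = a :: b :: t -> y \in t -> y.1 <= b.1.
Proof.
move=> E yt; have st := sort_sorted ge_total l; rewrite E /= in st.
case/andP: st => _ st; exact: sorted_head st yt.
Qed.

Lemma cnt_in (x : entry) s : (0 < count_mem x s)%N = (x \in s).
Proof. by rewrite -has_count has_pred1. Qed.

Lemma honest_facts (l : seq entry) :
  confirmed (honest_block l) = ohead (sort ge l) /\
  payment (honest_block l) = (nth (0, None) (sort ge l) 1).1.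
Proof.
rewrite /confirmed /payment /honest_block.
have st := sort_sorted ge_total l.
case E: (sort ge l) => [|a [|b t]] //=; rewrite E /= in st.
rewrite take0 sorted_sort //; [exact: ge_trans| by rewrite /= andbT; case/andP: st].
Qed.

Lemma overbid_ge0 (e : entry) : 0 <= overbid e.
Proof.
rewrite /overbid; case: e => x [v|] //=; case: ifP => // h.
by rewrite subr_ge0 ltW.
Qed.

Lemma pen_ge0 (s : seq entry) : 0 <= \sum_(e <- s) overbid e.
Proof. by apply: sumr_ge0 => e _; apply: overbid_ge0. Qed.

Lemma pen_ge (s : seq entry) x : x \in s -> overbid x <= \sum_(e <- s) overbid e.
Proof.
move=> xs; rewrite (perm_big _ (perm_to_rem xs)) big_cons.
by rewrite lerDl pen_ge0.
Qed.

Lemma overbid_bound (b w : R) : b - overbid (b, Some w) <= w.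
Proof.
rewrite /overbid /=; case: ifP => h.
  by rewrite opprB addrCA subrr addr0.
by rewrite subr0 leNgt h.
Qed.


Lemma cnt_sort (l : seq entry) x : count_mem x (sort ge l) = count_mem x l.
Proof. by apply/permP; rewrite perm_sort. Qed.

Lemma in_tl (l : seq entry) a t y : sort ge l = a :: t -> y \in l -> y != a -> y \in t.
Proof. by move=> E; rewrite -(mem_sort ge) E inE => /orP [->|]. Qed.

Lemma tl_le (l : seq entry) a b t y : sort ge l = a :: b :: t -> y \in b :: t -> y.1 <= b.1.
Proof. by move=> E; rewrite inE => /orP [/eqP -> //|]; apply: sort_2nd E. Qed.

Lemma two_le (l : seq entry) a t e f : sort ge l = a :: t ->
  (0 < count_mem e l)%N -> ((f == e) < count_mem f l)%N -> f.1 <= e.1 ->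
  exists b t', t = b :: t' /\ f.1 <= b.1.
Proof.
move=> E; rewrite -(cnt_sort l e) -(cnt_sort l f) E /= => ce cf fe.
case: t E cf ce => [|b t'] E cf ce.
  by move: cf ce => /=; rewrite !addn0; case: (a =P e) => [<-|] //; rewrite eq_sym ltnn.
exists b, t'; split => //.
have key : forall y, y \in b :: t' -> y.1 <= b.1 by move=> y; apply: tl_le E.
case: (a =P e) => [ae|ane].
- subst e; move: cf; rewrite [a == f]eq_sym.
  by rewrite -[X in (X < _)%N]addn0 ltn_add2l cnt_in => /key.
- have : e \in b :: t' by move: ce; case: (a =P e) => // _; rewrite add0n cnt_in.
  by move/key => eb; exact: le_trans fe eb.
Qed.


Lemma in_sort (l : seq entry) y : y \in l -> y \in sort ge l.
Proof. by rewrite mem_sort. Qed.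

Lemma honest_miner (hp : seq entry) :
  (forall y w, y \in hp -> y.2 = Some w -> w = y.1) ->
  (forall y, y \in hp -> 0 <= y.1) ->
  [/\ 0 <= weak_util true hp (honest_block hp),
      (forall y w, y \in hp -> y.2 = Some w -> w <= weak_util true hp (honest_block hp)) &
      (forall e f, (0 < count_mem e hp)%N -> ((f == e) < count_mem f hp)%N -> f.1 <= e.1 ->
         f.1 <= weak_util true hp (honest_block hp))].
Proof.
move=> hS hnn.
have pen0 : \sum_(e <- unconfirmed hp (honest_block hp)) overbid e = 0.
  rewrite big1_seq // => y /andP [_ yu].
  have yh : y \in hp.
    by move: yu; rewrite /unconfirmed; case: confirmed => [e|] //; apply: mem_rem.
  case: y yh {yu} => x [w|] yh //.
  by rewrite /overbid /= (hS _ w yh erefl) ltxx.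
rewrite /weak_util /miner_revenue pen0 subr0; case: (honest_facts hp) => -> ->.
case E: (sort ge hp) => [|a t].
  have nin : forall y, y \in hp -> False by move=> y /in_sort; rewrite E.
  split => /=.
  - by rewrite addr0.
  - by move=> y w /nin.
  - by move=> e f; rewrite cnt_in => /nin.
have ah : a \in hp by rewrite -(mem_sort ge) E mem_head.
case: a E ah => x [v|] E ah /=.
- have vx : v = x by apply: (hS _ _ ah).
  rewrite addrC subrK; split.
  + by rewrite vx; apply: (hnn _ ah).
  + by move=> y w yh yS; rewrite (hS _ _ yh yS) vx; apply: sort_hd E yh.
  + move=> e f ce _ fe; rewrite vx; apply: le_trans fe _.
    by apply: sort_hd E _; rewrite -cnt_in.
- rewrite addr0; split.
  + case: t E => [|b t'] E //=.
    by apply: hnn; rewrite -(mem_sort ge) E !inE eqxx orbT.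
  + move=> y w yh yS; have yt : y \in t.
      by apply: (in_tl E yh); apply/eqP => yx; rewrite yx in yS.
    case: t E yt => [|b t'] E // yt; rewrite (hS _ _ yh yS) /=.
    exact: tl_le E yt.
  + move=> e f ce cf fe; case: (two_le E ce cf fe) => b [t' [-> fb]] //.
Qed.


Lemma dev_miner (dp blk : seq entry) (U0 : R) :
  (forall y, count_mem y blk <= count_mem y dp)%N ->
  0 <= U0 ->
  (forall y w, y \in dp -> y.2 = Some w -> w <= U0) ->
  (forall e f, e.2 = None -> f.2 = None -> (0 < count_mem e dp)%N ->
     ((f == e) < count_mem f dp)%N -> f.1 <= e.1 -> f.1 <= U0) ->
  weak_util true dp blk <= U0.
Proof.
move=> hsub h0 hS hN.
rewrite /weak_util /miner_revenue /payment /unconfirmed /confirmed.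
have inb : forall y, y \in sort ge blk -> y \in dp.
  by move=> y; rewrite mem_sort -!cnt_in => c; exact: leq_trans c (hsub y).
case E: (sort ge blk) => [|e t] /=.
  by apply: (le_trans _ h0); rewrite addr0 sub0r oppr_le0 pen_ge0.
have ed : e \in dp by apply: inb; rewrite E mem_head.
case: e E ed => x [w|] E ed /=.
  rewrite [X in X - _]addrC subrK.
  by apply: le_trans (hS _ _ ed erefl); rewrite gerBl pen_ge0.
rewrite addr0.
case: t E => [|f t'] E /=.
  by apply: (le_trans _ h0); rewrite sub0r oppr_le0 pen_ge0.
have fd : f \in dp by apply: inb; rewrite E !inE eqxx orbT.
have fe : f.1 <= x.
  have := sort_sorted ge_total blk.
  by rewrite E => /sorted_head; apply; rewrite mem_head.
case: f E fd fe => fb [fw|] E fd fe.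
- have fr : (fb, Some fw) \in rem (x, None) dp.
    move: fd; rewrite (perm_mem (perm_to_rem ed)) inE.
    by case/orP => [/eqP H|//]; discriminate H.
  apply: (@le_trans _ _ (fb - overbid (fb, Some fw))).
    by apply: lerB => //; apply: pen_ge.
  apply: le_trans (overbid_bound fb fw) _.
  by apply: (hS _ _ fd erefl).
- apply: (@le_trans _ _ fb); first by rewrite gerBl pen_ge0.
  apply: (hN (x, None) (fb, None)) => //; first by rewrite cnt_in.
  apply: leq_trans (hsub _); rewrite -(cnt_sort blk) E /= eqxx.
  by rewrite [(x, None) == _]eq_sym -[X in (X < _)%N]addn0 ltn_add2l add1n ltnS.
Qed.


Lemma mem_tag (l : seq R) y : y \in tag_out l -> y.2 = None /\ y.1 \in l.
Proof. by case/mapP => o ol ->. Qed.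

Lemma mem_dev (others : seq R) bvs fakes y :
  y \in dev_pool others bvs fakes ->
  [\/ y.2 = None /\ y.1 \in others,
      exists2 p, p \in bvs & y = (p.1, Some p.2) |
      y.2 = Some 0 /\ y.1 \in fakes].
Proof.
rewrite /dev_pool !mem_cat => /orP [/mem_tag ?|/orP [/mapP [p pb ->]|/mapP [f fk ->]]].
- by apply: Or31.
- by apply: Or32; exists p.
- by apply: Or33.
Qed.

Lemma cnt_tag (l : seq R) y : y.2 <> None -> count_mem y (tag_out l) = 0%N.
Proof. by move=> yn; apply/count_memPn; apply/negP => /mem_tag []. Qed.

Lemma pen0 (hp : seq entry) :
  (forall y w, y \in hp -> y.2 = Some w -> w = y.1) ->
  \sum_(e <- unconfirmed hp (honest_block hp)) overbid e = 0.
Proof.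
move=> hS; rewrite big1_seq // => y /andP [_ yu].
have yh : y \in hp.
  by move: yu; rewrite /unconfirmed; case: confirmed => [e|] //; apply: mem_rem.
case: y yh {yu} => x [w|] yh //.
by rewrite /overbid /= (hS _ w yh erefl) ltxx.
Qed.

Lemma honest_uic (others : seq R) v hp :
  all (@nonneg R) others -> 0 <= v -> perm_eq hp (truthful_pool others [:: v]) ->
  0 <= weak_util false hp (honest_block hp) /\
  forall z, (forall o, o \in others -> o <= z) -> 0 <= z ->
     v - z <= weak_util false hp (honest_block hp).
Proof.
move=> /allP hon hv P.
have memh : forall y, y \in hp -> (y.2 = None /\ y.1 \in others) \/ y = (v, Some v).
  move=> y; rewrite (perm_mem P) mem_cat => /orP [/mem_tag ?|]; first by left.
  by rewrite inE => /eqP; right.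
have vh : (v, Some v) \in hp by rewrite (perm_mem P) mem_cat mem_head orbT.
have cv : count_mem (v, Some v) hp = 1%N.
  by rewrite (permP P) count_cat cnt_tag //= eqxx.
have hS : forall y w, y \in hp -> y.2 = Some w -> w = y.1.
  by move=> y w /memh [[-> //]|-> [->]].
rewrite /weak_util pen0 // subr0 add0r; case: (honest_facts hp) => -> ->.
case E: (sort ge hp) => [|a t].
  by move: vh; rewrite -(mem_sort ge) E.
have ah : a \in hp by rewrite -(mem_sort ge) E mem_head.
case: a E ah => x [w|] E ah /=.
- have [xv wv] : x = v /\ w = v by case: (memh _ ah) => [[//]|[-> ->]].
  subst x w.
  case: t E => [|b t'] E /=.
    by rewrite subr0; split => // z _ z0; rewrite gerBl.
  have bh : b \in hp by rewrite -(mem_sort ge) E !inE eqxx orbT.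
  have bv : b.1 <= v by apply: sort_hd E bh.
  case: (memh _ bh) => [[_ bo]|bv'].
    split; first by rewrite subr_ge0.
    by move=> z hz _; apply: lerB => //; apply: hz.
  exfalso; move: cv; rewrite -(cnt_sort hp) E bv' /= eqxx.
  by rewrite add1n.
- case: (memh _ ah) => [[_ xo]|//]; split => // z hz _.
  rewrite subr_le0; apply: le_trans (hz _ xo); exact: sort_hd E vh.
Qed.

Lemma dev_uic (others : seq R) b v fakes dp (U0 : R) :
  all (@nonneg R) others -> 0 <= b -> all (@nonneg R) fakes ->
  perm_eq dp (dev_pool others [:: (b, v)] fakes) ->
  0 <= U0 -> (forall z, (forall o, o \in others -> o <= z) -> 0 <= z -> v - z <= U0) ->
  weak_util false dp (honest_block dp) <= U0.
Proof.
move=> /allP hon hb /allP hf P h0 hz.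
have memd : forall y, y \in dp -> [\/ y.2 = None /\ y.1 \in others,
      exists2 p, p \in [:: (b, v)] & y = (p.1, Some p.2) |
      y.2 = Some 0 /\ y.1 \in fakes].
  by move=> y; rewrite (perm_mem P) => /mem_dev.
have nn : forall y, y \in dp -> 0 <= y.1.
  move=> y /memd [[_ /hon //]| [p] | [_ /hf //]].
  by rewrite inE => /eqP -> ->.
have od : forall o, o \in others -> (o, None) \in dp.
  by move=> o oi; rewrite (perm_mem P) !mem_cat; apply/orP; left; apply/mapP; exists o.
rewrite /weak_util add0r; case: (honest_facts dp) => -> ->.
case E: (sort ge dp) => [|a t] /=.
  by apply: (le_trans _ h0); rewrite sub0r oppr_le0 pen_ge0.
case: a E => x [w|] E /=; last first.
  by apply: (le_trans _ h0); rewrite sub0r oppr_le0 pen_ge0.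
have ah : (x, Some w) \in dp by rewrite -(mem_sort ge) E mem_head.
have z0 : 0 <= (nth (0, None) t 0).1.
  case: t E => [|c t'] E //=.
  by apply: nn; rewrite -(mem_sort ge) E !inE eqxx orbT.
have hoz : forall o, o \in others -> o <= (nth (0, None) t 0).1.
  move=> o oi; clear z0; have ot : (o, None) \in t.
    by apply: (in_tl E (od _ oi)); apply/eqP.
  case: t E ot => [|c t'] E ot //=.
  exact: (tl_le E ot).
apply: (@le_trans _ _ (w - (nth (0, None) t 0).1)); first by rewrite gerBl pen_ge0.
case: (memd _ ah) => [[//]|[p]|[[->] _]].
- rewrite inE => /eqP -> [_ ->]; exact: hz.
- by apply: (le_trans _ h0); rewrite sub0r oppr_le0.
Qed.


Lemma mem_zip2 (s t : seq R) p : p \in zip s t -> p.2 \in t.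
Proof.
elim: s t => [|x s IH] [|y t] //=; rewrite !inE => /orP [/eqP -> /=|/IH ->].
  by rewrite eqxx.
by rewrite orbT.
Qed.

Lemma cnt_someN (l : seq (R * R)) y : y.2 = None ->
  count_mem y [seq (p.1, Some p.2) | p <- l] = 0%N.
Proof. by move=> yn; apply/count_memPn; apply/negP => /mapP [p _ E]; rewrite E in yn. Qed.

Lemma cnt_someN' (l : seq R) y : y.2 = None ->
  count_mem y [seq (f, Some (0:R)) | f <- l] = 0%N.
Proof. by move=> yn; apply/count_memPn; apply/negP => /mapP [p _ E]; rewrite E in yn. Qed.

Lemma cnt_someV (l : seq R) y : y.2 = None ->
  count_mem y [seq (v, Some v) | v <- l] = 0%N.
Proof. by move=> yn; apply/count_memPn; apply/negP => /mapP [p _ E]; rewrite E in yn. Qed.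

Lemma scp_gen (B : option nat) (others vs bs fakes : seq R) (hp dp blk : seq entry) :
  all (@nonneg R) vs -> all (@nonneg R) others ->
  perm_eq hp (truthful_pool others vs) ->
  perm_eq dp (dev_pool others (zip bs vs) fakes) ->
  valid_block B dp blk ->
  weak_util true dp blk <= weak_util true hp (honest_block hp).
Proof.
move=> /allP hvs /allP hon Ph Pd [_ [m Pm]].
have memh : forall y, y \in hp -> (y.2 = None /\ y.1 \in others) \/
    (exists2 v, v \in vs & y = (v, Some v)).
  move=> y; rewrite (perm_mem Ph) mem_cat => /orP [/mem_tag ?|/mapP [v vi ->]].
    by left.
  by right; exists v.
have hS : forall y w, y \in hp -> y.2 = Some w -> w = y.1.
  by move=> y w /memh [[-> //]|[v _ ->] [->]].
have hnn : forall y, y \in hp -> 0 <= y.1.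
  by move=> y /memh [[_ /hon //]|[v /hvs ? -> //]].
case: (honest_miner hS hnn) => h0 hb hc.
apply: dev_miner => //.
- move=> y; rewrite (permP Pm); apply: leq_count_subseq; exact: mask_subseq.
- move=> y w; rewrite (perm_mem Pd) => /mem_dev [[-> //]|[p pz ->] [<-]|[-> _] [<-] //].
  apply: (hb (p.2, Some p.2)) => //.
  by rewrite (perm_mem Ph) mem_cat; apply/orP; right; apply/mapP; exists p.2 => //; apply: mem_zip2 pz.
- move=> e f en fn ce cf fe; apply: hc fe.
  + move: ce; rewrite (permP Pd) (permP Ph) /dev_pool /truthful_pool !count_cat.
    by rewrite cnt_someN // cnt_someN' // cnt_someV // !addn0.
  + move: cf; rewrite (permP Pd) (permP Ph) /dev_pool /truthful_pool !count_cat.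
    by rewrite cnt_someN // cnt_someN' // cnt_someV // !addn0.
Qed.

End Proofs.

Theorem mainTheorem6 (R : realFieldType) (B : option nat) :
  (forall b, B = Some b -> (2 <= b)%N) ->
  weak_UIC R /\ weak_MIC R B /\ (forall c : nat, (1 <= c)%N -> c_weak_SCP R B c).
Proof.
move=> _; split; [|split].
- move=> v b others fakes hp dp hv hb ho hf Ph Pd.
  case: (honest_uic ho hv Ph) => h0 hz.
  exact: (dev_uic ho hb hf Pd h0 hz).
- move=> others fakes hp dp blk ho hf Ph Pd V.
  apply: (@scp_gen R B others [::] [::] fakes hp dp blk) => //.
- move=> c _ vs bs others fakes hp dp blk _ _ hvs _ ho _ Ph Pd V.
  exact: (scp_gen hvs ho Ph Pd V).
Qed.
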